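(* Let $p_1,p_2$ be relatively prime positive integers with $p_1>p_2+1$ and $p_2\ge2$. Write $p_1=ap_2+b$ with integers $a\ge1$ and $0<b<p_2$. Let $\ell\in\{0,\dots,p_1-p_2-1\}$, write $\ell=\nu p_2+\ell'$ with integers $\nu\ge0$ and $0\le\ell'<p_2$, and let $c\in\big[\frac{\ell}{p_1-p_2},\frac{\ell+1}{p_1-p_2}\big)$. Write the first $p_1+p_2$ terms of $S_c(p_1,p_2)$ as $1^{k_1},2,1^{k_2},2,\dots,1^{k_{p_2}},2,1^{k_{p_2+1}}$. Then: - $k_1=\nu+1$; - for $i=2,\dots,p_2$, $k_i=a+1$ if $i=\lceil (jp_2-\ell')/b\rceil+1$ for some $j\in\{1,\dots,b\}$, and $k_i=a$ otherwise; - $k_{p_2+1}=p_1-(k_1+\cdots+k_{p_2})$.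
   Context: Stationary divisor method with cut point $c\in[0,1]$ for votes $(p_1,p_2)$: seats are allocated one at a time. Initially $a_1=a_2=0$; each next seat goes to a party $i$ maximizing $p_i/(a_i+c)$, whose $a_i$ then increases by $1$. Ties are broken in favor of party $1$. For $c=0$ the convention is that $p_1/0>p_2/0$, and $p_i/0>p_j/k$ for $k>0$. $S_c(p_1,p_2)$ is the infinite sequence of party labels (in $\{1,2\}$) of successive seats. It is periodic with period $p_1+p_2$, and its first $p_1+p_2$ terms contain exactly $p_1$ ones and $p_2$ twos. The notation $1^k$ denotes $k$ consecutive $1$'s. *)

(* Defs.v *)
From HB Require Import structures.
From mathcomp Require Import all_boot all_order all_algebra.
From mathcomp Require Import reals.
Set Implicit Arguments. Unset Strict Implicit. Unset Printing Implicit Defensive.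
Import Order.TTheory GRing.Theory Num.Theory.
Local Open Scope ring_scope.

Section Stationary.
Variables (R : realType) (c : R) (p1 p2 : nat).

(* Does party 1 get the next seat, when party 1 currently holds a1 seats and
   party 2 holds a2 seats?  A zero
   denominator (only possible when c = 0 and a_i = 0) means priority +infinity;
   ties (including 0-denominator ties) go to party 1. *)
Definition wins1 (a1 a2 : nat) : bool :=
  if a1%:R + c == 0 then true
  else if a2%:R + c == 0 then false
  else p2%:R / (a2%:R + c) <= p1%:R / (a1%:R + c).

Fixpoint alloc (n : nat) : nat * nat :=
  match n with
  | 0 => (0%N, 0%N)
  | n'.+1 => let: (a1, a2) := alloc n' in
             if wins1 a1 a2 then (a1.+1, a2) else (a1, a2.+1)
  end.

(* S_c(p1,p2): the label (1 or 2) of the seat number n (0-indexed, i.e. the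
   (n+1)-st term of the sequence). *)
Definition S (n : nat) : nat :=
  if wins1 (alloc n).1 (alloc n).2 then 1%N else 2%N.

End Stationary.

(* Main.v *)
Require Import Defs.
From HB Require Import structures.
From mathcomp Require Import all_boot all_order all_algebra.
From mathcomp Require Import reals.
From mathcomp Require Import zify ring lra.
Import Order.TTheory GRing.Theory Num.Theory.
Local Open Scope ring_scope.

Section Gen.
Variables (R : realType) (c : R) (p1 p2 : nat).

Lemma alloc_run n x y t : alloc c p1 p2 n = (x, y) ->
  (forall u, (u < t)%N -> wins1 c p1 p2 (x + u) y) ->
  alloc c p1 p2 (n + t) = (x + t, y)%N /\
  [seq S c p1 p2 i | i <- iota n t] = nseq t 1%N.
Proof.
move=> Ha Hw; elim: t Hw => [|t IH] Hw.
  by rewrite !addn0 Ha.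
have [IH1 IH2] := IH (fun u hu => Hw u (ltnW hu)).
have Wt := Hw t (ltnSn t).
split.
  by rewrite addnS /= IH1 Wt addnS.
rewrite -addn1 iotaD map_cat IH2 /= /S IH1 /= Wt.
by rewrite -[in RHS]addn1 nseqD.
Qed.

Lemma alloc_block n x y t : alloc c p1 p2 n = (x, y) ->
  (forall u, (u < t)%N -> wins1 c p1 p2 (x + u) y) ->
  ~~ wins1 c p1 p2 (x + t) y ->
  alloc c p1 p2 (n + t.+1) = (x + t, y.+1)%N /\
  [seq S c p1 p2 i | i <- iota n t.+1] = nseq t 1%N ++ [:: 2%N].
Proof.
move=> Ha Hw Hn; have [H1 H2] := @alloc_run n x y t Ha Hw.
split.
  by rewrite addnS /= H1 (negbTE Hn).
by rewrite -addn1 iotaD map_cat H2 /= /S H1 /= (negbTE Hn).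
Qed.

End Gen.
Lemma wins1_nat (R : realType) (c : R) p1 p2 l x y : (p2 < p1)%N -> (0 < p2)%N ->
  l%:R <= c * (p1 - p2)%:R -> c * (p1 - p2)%:R < l.+1%:R ->
  wins1 c p1 p2 x y = (p2 * x <= p1 * y + l)%N.
Proof.
move=> h21 h2 hl hu.
have hd : (0 : R) < (p1 - p2)%:R by rewrite ltr0n subn_gt0.
have hD : ((p1 - p2)%:R : R) = p1%:R - p2%:R by rewrite natrB // ltnW.
have c0 : 0 <= c.
  have l0 : (0 : R) <= l%:R by [].
  by have := le_trans l0 hl; rewrite pmulr_lge0.
rewrite /wins1.
have x0 : (0 : R) <= x%:R by [].
have y0 : (0 : R) <= y%:R by [].
case: eqP => [Hx|Hx].
  have -> : x = 0%N by apply/eqP; rewrite -(eqr_nat R); apply/eqP; lra.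
  by rewrite muln0.
case: eqP => [Hy|Hy].
  have cz : c = 0 by lra.
  have -> : y = 0%N by apply/eqP; rewrite -(eqr_nat R); apply/eqP; lra.
  have : (l%:R : R) <= 0 by rewrite cz mul0r in hl.
  rewrite lern0 => /eqP ->.
  have : x != 0%N by apply/eqP => hx; apply: Hx; rewrite hx cz; lra.
  move=> hx; rewrite muln0 !addn0 leqn0 muln_eq0 (negbTE hx) orbF.
  by rewrite eqn0Ngt h2.
have px : 0 < x%:R + c by lra.
have py : 0 < y%:R + c by lra.
rewrite ler_pdivrMr // mulrAC ler_pdivlMr //.
rewrite hD in hl hu.
apply/idP/idP => H.
  suff : ((p2 * x)%:R : R) < (p1 * y + l.+1)%:R by rewrite ltr_nat addnS ltnS.
  rewrite natrD !natrM; nra.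
rewrite -(ler_nat R) natrD !natrM in H.
nra.
Qed.
Lemma ceil_char (R : realType) (p2 b l' m j : nat) : (0 < b)%N ->
  ((Posz m.+2) == Num.ceil (((j * p2)%:R - l'%:R) / (b%:R : R)) + 1) =
  (m * b + l' < j * p2)%N && (j * p2 <= m.+1 * b + l')%N.
Proof.
move=> hb.
have hb' : (0 : R) < b%:R by rewrite ltr0n.
set v := ((j * p2)%:R - l'%:R) / (b%:R : R).
have E1 : (Posz m.+2 == Num.ceil v + 1) = (Num.ceil v <= Posz m.+1) && (Posz m < Num.ceil v).
  move: (Num.ceil v) => z; apply/eqP/andP; [move=> h; split; lia | case=> h1 h2; lia].
rewrite E1 ceil_le_int ceil_gt_int -!pmulrn andbC.
rewrite /v ler_pdivrMr // ltr_pdivlMr // lerBlDr ltrBrDr.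
by rewrite -!natrM -!natrD ler_nat ltr_nat.
Qed.

Lemma k_step (R : realType) (p1 p2 a b l nu l' m : nat) :
  (0 < b)%N -> (b < p2)%N -> p1 = (a * p2 + b)%N -> l = (nu * p2 + l')%N ->
  (l' < p2)%N -> (m.+1 < p2)%N ->
  ((p1 * m + l) %/ p2 +
   (if [exists j : 'I_b.+1, (0 < (j : nat))%N &&
       ((Posz m.+2) == Num.ceil (((j * p2)%:R - l'%:R) / (b%:R : R)) + 1)%R]
    then a.+1 else a) = (p1 * m.+1 + l) %/ p2)%N.
Proof.
move=> hb hbp hp1 hl hl' hm.
have p20 : (0 < p2)%N by lia.
have eqX : (p1 * m + l = (a * m + nu) * p2 + (m * b + l'))%N by rewrite hp1 hl; ring.
have eqY : (p1 * m.+1 + l = (a * m.+1 + nu) * p2 + (m.+1 * b + l'))%N by rewrite hp1 hl; ring.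
rewrite eqX eqY !divnMDl //.
set X := (m * b + l')%N.
set Y := (m.+1 * b + l')%N.
have hXY : (Y = X + b)%N by rewrite /X /Y mulSn; lia.
have hb1 : (Y %/ p2 <= X %/ p2 + 1)%N.
  rewrite -ltnS -[(X %/ p2 + 1).+1]addn1 ltn_divLR //.
  have := ltn_ceil X p20; nia.
have hb2 : (X %/ p2 <= Y %/ p2)%N by rewrite leq_div2r // hXY leq_addr.
case: existsP => [[j /andP [hj0 hjc]] | hne].
  rewrite ceil_char // in hjc; case/andP: hjc => hX hY.
  have h1 : (X %/ p2 < j)%N by rewrite ltn_divLR.
  have h2 : (j <= Y %/ p2)%N by rewrite leq_divRL.
  lia.
have : (Y %/ p2 <= X %/ p2)%N.
  rewrite leqNgt; apply/negP => hlt.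
  have hjb : (Y %/ p2 < b.+1)%N.
    rewrite ltn_divLR // /Y; nia.
  apply: hne; exists (Ordinal hjb) => /=.
  rewrite ceil_char //; apply/and3P; split.
  - exact: leq_ltn_trans (leq0n _) hlt.
  - by rewrite -ltn_divLR.
  - exact: leq_trunc_div.
lia.
Qed.

Theorem mainTheorem11 (R : realType) (p1 p2 a b l nu l' : nat) (c : R) :
  coprime p1 p2 -> (p2.+1 < p1)%N -> (2 <= p2)%N ->
  (1 <= a)%N -> (0 < b)%N -> (b < p2)%N -> p1 = (a * p2 + b)%N ->
  (l <= p1 - p2 - 1)%N -> l = (nu * p2 + l')%N -> (l' < p2)%N ->
  l%:R / (p1 - p2)%:R <= c -> c < l.+1%:R / (p1 - p2)%:R ->
  let k : nat -> nat := fun i =>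
    if i == 1%N then nu.+1
    else if [exists j : 'I_b.+1,
               (0 < (j : nat))%N &&
               ((i : int) == Num.ceil (((j * p2)%:R - l'%:R) / (b%:R : R)) + 1)]
         then a.+1 else a in
  [seq S c p1 p2 n | n <- iota 0 (p1 + p2)] =
    flatten [seq nseq (k i) 1%N ++ [:: 2%N] | i <- iota 1 p2]
    ++ nseq (p1 - \sum_(1 <= i < p2.+1) k i) 1%N.
Proof.
move=> _ h21 h2 ha hb hbp hp1 hll hl hl' hcl hcu k.
have p20 : (0 < p2)%N by lia.
have hd : (0 : R) < (p1 - p2)%:R by rewrite ltr0n subn_gt0; lia.
have hwin : forall x y, wins1 c p1 p2 x y = (p2 * x <= p1 * y + l)%N.
  move=> x y; apply: wins1_nat; first by lia.
  - done.
  - by rewrite -ler_pdivrMr.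
  - by rewrite -ltr_pdivlMr.
pose K m := (\sum_(1 <= i < m.+1) k i)%N.
have K0 : K 0%N = 0%N by rewrite /K big_geq.
have KS : forall m, K m.+1 = (K m + k m.+1)%N.
  by move=> m; rewrite /K big_nat_recr.
have HK : forall m, (m < p2)%N -> K m.+1 = ((p1 * m + l) %/ p2 + 1)%N.
  elim=> [|m IH] hm.
    rewrite KS K0 add0n muln0 add0n hl divnMDl // divn_small //.
    by rewrite /k /= addn0 addn1.
  rewrite KS IH; last by lia.
  rewrite -addnA [(1 + _)%N]addnC addnA.
  have -> : k m.+2 = (if [exists j : 'I_b.+1, (0 < (j : nat))%N &&
       ((Posz m.+2) == Num.ceil (((j * p2)%:R - l'%:R) / (b%:R : R)) + 1)%R]
    then a.+1 else a) by [].
  by rewrite (@k_step R p1 p2 a b l nu l' m).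
have Inv : forall m, (m <= p2)%N ->
  alloc c p1 p2 (K m + m) = (K m, m) /\
  [seq S c p1 p2 i | i <- iota 0 (K m + m)] =
    flatten [seq nseq (k i) 1%N ++ [:: 2%N] | i <- iota 1 m].
  elim=> [|m IH] hm.
    by rewrite K0.
  have [IH1 IH2] := IH (ltnW hm).
  have hKm := HK m hm.
  have Hw : forall u, (u < k m.+1)%N -> wins1 c p1 p2 (K m + u) m.
    move=> u hu; rewrite hwin mulnC -leq_divRL //.
    have := KS m; lia.
  have Hn : ~~ wins1 c p1 p2 (K m + k m.+1) m.
    rewrite hwin -ltnNge -KS hKm addn1 (mulnC p2); exact: ltn_ceil.
  have [B1 B2] := @alloc_block R c p1 p2 _ _ _ _ IH1 Hw Hn.
  have e : (K m.+1 + m.+1 = K m + m + (k m.+1).+1)%N by rewrite KS; lia.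
  rewrite e B1 -KS; split => //.
  rewrite iotaD map_cat IH2 add0n B2.
  have -> : iota 1 m.+1 = iota 1 m ++ [:: m.+1] by rewrite -(addn1 m) iotaD add1n addn1.
  by rewrite map_cat flatten_cat /= cats0.
have [I1 I2] := Inv p2 (leqnn p2).
have eP : p2 = (p2.-1).+1 by lia.
have hKp : K p2 = ((p1 * p2.-1 + l) %/ p2 + 1)%N by rewrite {1}eP HK //; lia.
have hKp1 : (K p2 <= p1)%N.
  rewrite hKp addn1 ltn_divLR //.
  rewrite {2}eP mulnS; lia.
have Hw : forall u, (u < p1 - K p2)%N -> wins1 c p1 p2 (K p2 + u) p2.
  move=> u hu; rewrite hwin; nia.
have [R1 R2] := @alloc_run R c p1 p2 _ _ _ _ I1 Hw.
have e : (p1 + p2 = K p2 + p2 + (p1 - K p2))%N by lia.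
by rewrite e iotaD map_cat I2 add0n R2.
Qed.
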